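(* Let $\mathcal{A}$ and $\mathcal{B}$ be unital Banach algebras, $T\in\mathcal{L}^1(\mathcal{A},\mathcal{B})$ and $\Psi\in\mathcal{L}^2(\mathcal{B},\mathcal{B})$. Then $$\|\delta_T^2\,T^{\vee}\|\leq \mathrm{adef}(\Psi)\cdot\|T\|^3.$$
   Context: $\mathcal{L}^n(\mathcal{A},\mathcal{B})$ denotes the space of bounded $n$-linear maps $\mathcal{A}^n\to\mathcal{B}$ with the operator norm. $T^{\vee}\in\mathcal{L}^2(\mathcal{A},\mathcal{B})$ is defined by $T^{\vee}(x,y)=T(xy)-\Psi(T(x),T(y))$. The operator $\delta_T^2:\mathcal{L}^2(\mathcal{A},\mathcal{B})\to\mathcal{L}^3(\mathcal{A},\mathcal{B})$ is defined by $\delta_T^2\phi(x,y,z)=\Psi(T(x),\phi(y,z))-\phi(xy,z)+\phi(x,yz)-\Psi(\phi(x,y),T(z))$. The associative defect is $\mathrm{adef}(\Psi)=\sup\{\|\Psi(u,\Psi(v,w))-\Psi(\Psi(u,v),w)\|: u,v,w\in\mathcal{B},\ \|u\|,\|v\|,\|w\|\leq1\}$. *)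

(* Defs.v *)
From HB Require Import structures.
From mathcomp Require Import all_boot all_order all_algebra.
From mathcomp Require Import all_classical all_reals.
From mathcomp Require Import topology normedtype.
Set Implicit Arguments. Unset Strict Implicit. Unset Printing Implicit Defensive.
Import Order.TTheory GRing.Theory Num.Theory.
Import numFieldNormedType.Exports.
Local Open Scope classical_set_scope.
Local Open Scope ring_scope.

Section Defs.
Context {R : realType}.

Definition unital_banach_algebra (A : completeNormedModType R)
    (mul : A -> A -> A) (one : A) : Prop :=
  [/\ associative mul, left_id one mul & right_id one mul] /\
  [/\ (forall (a : R) (x y z : A), mul (a *: x + y) z = a *: mul x z + mul y z),
      (forall (a : R) (x y z : A), mul z (a *: x + y) = a *: mul z x + mul z y),
      (forall x y : A, `|mul x y| <= `|x| * `|y|)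
    & `|one| = 1].

Variables (A B : normedModType R).

Definition lin1 (f : A -> B) : Prop :=
  forall (a : R) (x y : A), f (a *: x + y) = a *: f x + f y.

Definition lin2 (f : A -> A -> B) : Prop :=
  (forall y, lin1 (fun x => f x y)) /\ (forall x, lin1 (fun y => f x y)).

Definition lin3 (f : A -> A -> A -> B) : Prop :=
  [/\ forall y z, lin1 (fun x => f x y z),
      forall x z, lin1 (fun y => f x y z)
    & forall x y, lin1 (fun z => f x y z)].

Definition bounded1 (f : A -> B) : Prop :=
  lin1 f /\ exists M : R, forall x, `|f x| <= M * `|x|.

Definition bounded2 (f : A -> A -> B) : Prop :=
  lin2 f /\ exists M : R, forall x y, `|f x y| <= M * `|x| * `|y|.

Definition opnorm1 (f : A -> B) : R :=
  sup [set r | exists x, `|x| <= 1 /\ r = `|f x|].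

Definition opnorm2 (f : A -> A -> B) : R :=
  sup [set r | exists x y, [/\ `|x| <= 1, `|y| <= 1 & r = `|f x y|]].

Definition opnorm3 (f : A -> A -> A -> B) : R :=
  sup [set r | exists x y z,
        [/\ `|x| <= 1, `|y| <= 1, `|z| <= 1 & r = `|f x y z|]].

Definition Tvee (mulA : A -> A -> A) (T : A -> B) (Psi : B -> B -> B)
  : A -> A -> B := fun x y => T (mulA x y) - Psi (T x) (T y).

Definition delta2 (mulA : A -> A -> A) (T : A -> B) (Psi : B -> B -> B)
  (phi : A -> A -> B) : A -> A -> A -> B :=
  fun x y z => Psi (T x) (phi y z) - phi (mulA x y) z + phi x (mulA y z)
               - Psi (phi x y) (T z).

End Defs.

Definition adef {R : realType} {B : normedModType R} (Psi : B -> B -> B) : R :=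
  sup [set r | exists u v w : B,
        [/\ `|u| <= 1, `|v| <= 1, `|w| <= 1 &
            r = `|Psi u (Psi v w) - Psi (Psi u v) w|]].

(* Main.v *)
Require Import Defs.
From HB Require Import structures.
From mathcomp Require Import all_boot all_order all_algebra.
From mathcomp Require Import all_classical all_reals.
From mathcomp Require Import topology normedtype.
From mathcomp Require Import ring.
Import Order.TTheory GRing.Theory Num.Theory.
Import numFieldNormedType.Exports.
Local Open Scope ring_scope.

Section S.
Context {R : realType} {A B : normedModType R}.

Lemma lin1_0 (f : A -> B) : lin1 f -> f 0 = 0.
Proof. move=> h; have := h 1 0 0; rewrite !scale1r addr0 => H.
by apply: (@addrI _ (f 0)); rewrite addr0 -H. Qed.

Arguments lin1_0 {f}.
Lemma lin1_Z (f : A -> B) : lin1 f -> forall a x, f (a *: x) = a *: f x.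
Proof. by move=> h a x; have := h a x 0; rewrite !addr0 (lin1_0 h) addr0. Qed.

Lemma lin1_B (f : A -> B) : lin1 f -> forall x y, f (x - y) = f x - f y.
Proof. move=> h x y; have := h (-1) y x.
by rewrite !scaleN1r addrC => ->; rewrite addrC. Qed.
End S.
Arguments lin1_0 {R A B f}.
Arguments lin1_Z {R A B f}.
Arguments lin1_B {R A B f}.

Section T.
Context {R : realType} {B : normedModType R}.
Variable Psi : B -> B -> B.
Hypothesis hP : bounded2 Psi.

Definition Dn u v w := `|Psi u (Psi v w) - Psi (Psi u v) w|.

Lemma PsiZl a u v : Psi (a *: u) v = a *: Psi u v.
Proof. by case: hP => [[h1 h2] _]; rewrite (lin1_Z (h1 v)). Qed.
Lemma PsiZr a u v : Psi u (a *: v) = a *: Psi u v.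
Proof. by case: hP => [[h1 h2] _]; rewrite (lin1_Z (h2 u)). Qed.

Lemma DnZ1 a u v w : Dn (a *: u) v w = `|a| * Dn u v w.
Proof. by rewrite /Dn !PsiZl -scalerBr normrZ. Qed.
Lemma DnZ2 a u v w : Dn u (a *: v) w = `|a| * Dn u v w.
Proof. by rewrite /Dn PsiZl PsiZr PsiZr PsiZl -scalerBr normrZ. Qed.
Lemma DnZ3 a u v w : Dn u v (a *: w) = `|a| * Dn u v w.
Proof. by rewrite /Dn !PsiZr -scalerBr normrZ. Qed.

Lemma adef_ub : has_ubound [set r | exists u v w : B,
        [/\ `|u| <= 1, `|v| <= 1, `|w| <= 1 &
            r = `|Psi u (Psi v w) - Psi (Psi u v) w|]].
Proof.
case: hP => _ [M hM].
have hM' : forall x y, `|Psi x y| <= `|M| * (`|x| * `|y|).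
  move=> x y; apply: (le_trans (hM x y)); rewrite -mulrA ler_wpM2r //.
    by rewrite mulr_ge0. exact: ler_norm.
have m0 : 0 <= `|M| by [].
exists (`|M| * `|M| + `|M| * `|M|) => r [u [v [w [hu hv hw ->]]]].
apply: (le_trans (ler_normB _ _)); apply: lerD.
- apply: (le_trans (hM' _ _)); apply: ler_wpM2l => //.
  rewrite -[X in _ <= X]mul1r; apply: ler_pM => //.
  apply: (le_trans (hM' _ _)); rewrite -[X in _ <= X]mulr1; apply: ler_wpM2l => //.
  by rewrite -[X in _ <= X]mulr1; apply: ler_pM.
- apply: (le_trans (hM' _ _)); apply: ler_wpM2l => //.
  rewrite -[X in _ <= X]mulr1; apply: ler_pM => //.
  apply: (le_trans (hM' _ _)); rewrite -[X in _ <= X]mulr1; apply: ler_wpM2l => //.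
  by rewrite -[X in _ <= X]mulr1; apply: ler_pM.
Qed.

Lemma adef_ge0 : 0 <= adef Psi.
Proof.
apply: (ub_le_sup adef_ub).
exists 0, 0, 0; split; rewrite ?normr0 //.
case: hP => [[h1 h2] _]; by rewrite !(lin1_0 (h1 _)) subr0 normr0.
Qed.

Lemma Dn_le1 u v w : `|u| <= 1 -> `|v| <= 1 -> `|w| <= 1 -> Dn u v w <= adef Psi.
Proof. by move=> hu hv hw; apply: (ub_le_sup adef_ub); exists u, v, w. Qed.

Lemma Dn_le u v w : Dn u v w <= adef Psi * `|u| * `|v| * `|w|.
Proof.
case: hP => [[h1 h2] _].
have [->|u0] := eqVneq u 0.
  by rewrite /Dn !(lin1_0 (h1 _), lin1_0 (h2 _)) subr0 !normr0 ?mulr0 ?mul0r.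
have [->|v0] := eqVneq v 0.
  by rewrite /Dn !(lin1_0 (h1 _), lin1_0 (h2 _)) subr0 !normr0 ?mulr0 ?mul0r.
have [->|w0] := eqVneq w 0.
  by rewrite /Dn !(lin1_0 (h1 _), lin1_0 (h2 _)) subr0 !normr0 ?mulr0.
have nu : `|u| != 0 by rewrite normr_eq0.
have nv : `|v| != 0 by rewrite normr_eq0.
have nw : `|w| != 0 by rewrite normr_eq0.
have eu : u = `|u| *: (`|u|^-1 *: u) by rewrite scalerA divff // scale1r.
have ev : v = `|v| *: (`|v|^-1 *: v) by rewrite scalerA divff // scale1r.
have ew : w = `|w| *: (`|w|^-1 *: w) by rewrite scalerA divff // scale1r.
have n1 (x : B) : x != 0 -> `| `|x|^-1 *: x | <= 1.
  move=> x0; rewrite normrZ normfV normr_id mulVf ?normr_eq0 //.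
rewrite eu ev ew DnZ1 DnZ2 DnZ3 -eu -ev -ew !normr_id.
have -> : adef Psi * `|u| * `|v| * `|w| = `|u| * (`|v| * (`|w| * adef Psi)) by ring.
do 3 (apply: ler_wpM2l => //).
exact: Dn_le1 (n1 _ u0) (n1 _ v0) (n1 _ w0).
Qed.
End T.

Lemma zid (R : realType) (B : normedModType R) (p q t r s : B) :
  p - q - (t - r) + (t - p) - (r - s) = - (q - s).
Proof.
rewrite !opprB !addrA subrK addrAC [p - q + r - p]addrAC addrK [p - q - p]addrAC subrr add0r addrC.
by [].
Qed.

Theorem lemma2p1 (R : realType) (A B : completeNormedModType R)
    (mulA : A -> A -> A) (oneA : A) (mulB : B -> B -> B) (oneB : B)
    (hA : unital_banach_algebra mulA oneA)
    (hB : unital_banach_algebra mulB oneB)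
    (T : A -> B) (Psi : B -> B -> B)
    (hT : bounded1 T) (hPsi : bounded2 Psi) :
  opnorm3 (delta2 mulA T Psi (Tvee mulA T Psi)) <= adef Psi * opnorm1 T ^+ 3.
Proof.
case: hA => [[assocA _ _] _].
case: (hT) => hTl [M hM].
have hP := hPsi; case: hP => [[h1 h2] _].
have T0 : T 0 = 0 := lin1_0 hTl.
have ubT : has_ubound [set r | exists x, `|x| <= 1 /\ r = `|T x|].
  exists `|M| => r [x [hx ->]]; apply: (le_trans (hM x)).
  apply: (le_trans (ler_wpM2r (normr_ge0 x) (ler_norm M))).
  by rewrite -[X in _ <= X]mulr1 ler_wpM2l.
have Tb x : `|x| <= 1 -> `|T x| <= opnorm1 T.
  by move=> hx; apply: (ub_le_sup ubT); exists x.
have o0 : 0 <= opnorm1 T.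
  by have := Tb 0; rewrite normr0 => /(_ ler01); apply: le_trans.
have a0 := @adef_ge0 _ _ Psi hPsi.
apply: ge_sup.
  by exists (`|delta2 mulA T Psi (Tvee mulA T Psi) 0 0 0|), 0, 0, 0; split; rewrite ?normr0.
move=> r [x [y [z [hx hy hz ->]]]].
have -> : delta2 mulA T Psi (Tvee mulA T Psi) x y z =
   - (Psi (T x) (Psi (T y) (T z)) - Psi (Psi (T x) (T y)) (T z)).
  rewrite /delta2 /Tvee (lin1_B (h2 _)) (lin1_B (h1 _)) assocA.
  exact: zid.
rewrite normrN.
apply: (le_trans (@Dn_le _ _ Psi hPsi _ _ _)).
rewrite exprS expr2 !mulrA; apply: ler_pM; rewrite ?mulr_ge0 //; last exact: Tb.
apply: ler_pM; rewrite ?mulr_ge0 //; last exact: Tb.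
apply: ler_pM; rewrite ?mulr_ge0 //; last exact: Tb.
Qed.
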